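(* Let $$\Lambda=\begin{pmatrix}2&-1&-1&-1&-1&-1&3&0&0&0&0&0\\-1&2&-1&-1&-1&-1&0&3&0&0&0&0\\-1&-1&2&-1&-1&-1&0&0&3&0&0&0\\0&0&0&3&0&0&-1&-1&-1&2&-1&-1\\0&0&0&0&3&0&-1&-1&-1&-1&2&-1\end{pmatrix},$$ $$W=\begin{pmatrix}3&0&0&-1&-1&-1\\0&3&0&-1&-1&-1\\0&0&3&-1&-1&-1\\-1&-1&-1&3&0&0\\-1&-1&-1&0&3&0\end{pmatrix}.$$ Let $\mathbb X$ be the complete toric variety whose fan is the fan over the faces of $\Delta=\mathrm{conv}(\Lambda)\subset\mathbb R^5$, and $X$ the complete toric variety whose fan is the fan over the faces of the simplex $\mathrm{conv}(W)$ (so $X\cong\mathbb P^5/(\mu_3^2\times\mu_9)$). The fan of $\mathbb X$ refines that of $X$, and $\phi:\mathbb X\to X$ denotes the induced birational toric morphism (the blow up of $X$ at six torus fixed points). Let $x_1,\dots,x_{12}$ be the Cox coordinates of $\mathbb X$ ($x_i$ corresponding to the $i$-th column of $\Lambda$) and $y_1,\dots,y_6$ those of $X$ ($y_j$ corresponding to the $j$-th column of $W$). For $\psi\in\mathbb C$ let $Y^\vee_{BB}=\mathcal V(p_{1,\psi},p_{2,\psi})\subset\mathbb X$ and $Y^\vee_{LT}=\mathcal V(q_{1,\psi},q_{2,\psi})\subset X$ with $$p_{1,\psi}=x_1^3x_7^3+x_2^3x_8^3+x_3^3x_9^3+\psi x_1x_2x_3x_4x_5x_6,\quad p_{2,\psi}=x_4^3x_{10}^3+x_5^3x_{11}^3+x_6^3x_{12}^3+\psi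 x_7x_8x_9x_{10}x_{11}x_{12},$$ $$q_{1,\psi}=y_1^3+y_2^3+y_3^3+\psi y_4y_5y_6,\quad q_{2,\psi}=\psi y_1y_2y_3+y_4^3+y_5^3+y_6^3.$$ Then, for generic $\psi$, $Y^\vee_{BB}=\phi^{-1}_*(Y^\vee_{LT})$ is the strict transform of $Y^\vee_{LT}$ under $\phi$.
   Context: The fan over the faces of a polytope containing the origin in its interior is the complete fan consisting of the cones over its proper faces. Cox coordinates: a complete toric variety whose rays are generated by the columns of a fan matrix is a quotient of an open subset of $\mathbb C^m$ ($m$ = number of columns) by a quasi-torus; $\mathcal V(f_1,\dots,f_s)$ is the subvariety cut out by the homogeneous polynomials $f_i$. The strict transform $\phi^{-1}_*(Y)$ is the closure of $\phi^{-1}(Y\cap U)$, $U$ the open set over which $\phi$ is an isomorphism. *)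

(* Defs.v *)
From HB Require Import structures.
From mathcomp Require Import all_boot all_order all_algebra.
From mathcomp Require Import complex.
From mathcomp Require Import Rstruct.
From mathcomp Require mpoly.
Set Implicit Arguments. Unset Strict Implicit. Unset Printing Implicit Defensive.
Import GRing.Theory Num.Theory.
Local Open Scope ring_scope.

Definition RR : realFieldType := Rdefinitions.R.
Definition C : numClosedFieldType := (Rdefinitions.R)[i].

(** Fan matrices (columns = ray generators in N = Z^5). *)
Definition mat_of_rows (m : nat) (rows : seq (seq int)) : 'M[int]_(5, m) :=
  \matrix_(k < 5, i < m) nth 0 (nth [::] rows k) i.

Definition Lambda : 'M[int]_(5, 12) := mat_of_rows 12
  [:: [:: 2; -1; -1; -1; -1; -1; 3; 0; 0; 0; 0; 0];
      [:: -1; 2; -1; -1; -1; -1; 0; 3; 0; 0; 0; 0];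
      [:: -1; -1; 2; -1; -1; -1; 0; 0; 3; 0; 0; 0];
      [:: 0; 0; 0; 3; 0; 0; -1; -1; -1; 2; -1; -1];
      [:: 0; 0; 0; 0; 3; 0; -1; -1; -1; -1; 2; -1] ]%R.

Definition Wm : 'M[int]_(5, 6) := mat_of_rows 6
  [:: [:: 3; 0; 0; -1; -1; -1];
      [:: 0; 3; 0; -1; -1; -1];
      [:: 0; 0; 3; -1; -1; -1];
      [:: -1; -1; -1; 3; 0; 0];
      [:: -1; -1; -1; 0; 3; 0] ]%R.

Section Toric.
Variables (m : nat) (M : 'M[int]_(5, m)).

(** [I] is the set of columns of [M] lying on a proper face of conv(M)
    (the origin being interior): there is a linear functional [u] with
    <u, v_i> = 1 exactly for i in I and <u, v_i> < 1 for the other columns.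
    The cones of the fan over the faces of conv(M) are the cones spanned by
    such column sets. *)
Definition face_set (I : {set 'I_m}) : Prop :=
  exists u : 'I_5 -> RR,
    (forall i, i \in I -> \sum_(k < 5) u k * (M k i)%:~R = 1) /\
    (forall i, i \notin I -> \sum_(k < 5) u k * (M k i)%:~R < 1).

(** Points of C^m outside the exceptional set Z(Sigma): the coordinates
    vanishing at x are rays of a common cone of the fan. *)
Definition nonexc (x : 'I_m -> C) : Prop :=
  exists I, face_set I /\ forall i, x i = 0 -> i \in I.

(** The quasi-torus G = Hom(Cl, C-star) acting on C^m. *)
Definition in_G (t : 'I_m -> C) : Prop :=
  (forall i, t i != 0) /\ forall k : 'I_5, \prod_(i < m) t i ^ (M k i) = 1.

Definition act (t x : 'I_m -> C) : 'I_m -> C := fun i => t i * x i.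

Definition G_invariant (A : ('I_m -> C) -> Prop) : Prop :=
  forall t x, in_G t -> A x -> A (act t x).

Definition zclosed (A : ('I_m -> C) -> Prop) : Prop :=
  exists F : mpoly.mpoly m C -> Prop,
    forall x, A x <-> (nonexc x /\ forall f, F f -> mpoly.meval x f = 0).

(** Closed subsets of the toric variety X_Sigma = (C^m \ Z) / G correspond
    (via the quotient map, which is submersive) to G-invariant Zariski closed
    subsets of C^m \ Z.  Hence, for a G-invariant S (a subset of X_Sigma
    given by its preimage), its closure in X_Sigma is given by the preimage
    below. *)
Definition tclosure (S : ('I_m -> C) -> Prop) : ('I_m -> C) -> Prop :=
  fun x => nonexc x /\
    forall A, zclosed A -> G_invariant A -> (forall y, S y -> A y) -> A x.

End Toric.

(** 1-based access to Cox coordinates. *)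
Definition cx (n : nat) (x : 'I_n.+1 -> C) (k : nat) : C := x (inord k.-1).

Definition p1 (psi : C) (x : 'I_12 -> C) : C :=
  cx x 1 ^+ 3 * cx x 7 ^+ 3 + cx x 2 ^+ 3 * cx x 8 ^+ 3 + cx x 3 ^+ 3 * cx x 9 ^+ 3
  + psi * (cx x 1 * cx x 2 * cx x 3 * cx x 4 * cx x 5 * cx x 6).
Definition p2 (psi : C) (x : 'I_12 -> C) : C :=
  cx x 4 ^+ 3 * cx x 10 ^+ 3 + cx x 5 ^+ 3 * cx x 11 ^+ 3 + cx x 6 ^+ 3 * cx x 12 ^+ 3
  + psi * (cx x 7 * cx x 8 * cx x 9 * cx x 10 * cx x 11 * cx x 12).
Definition Y_BB (psi : C) (x : 'I_12 -> C) : Prop :=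
  nonexc Lambda x /\ p1 psi x = 0 /\ p2 psi x = 0.

Definition q1 (psi : C) (y : 'I_6 -> C) : C :=
  cx y 1 ^+ 3 + cx y 2 ^+ 3 + cx y 3 ^+ 3 + psi * (cx y 4 * cx y 5 * cx y 6).
Definition q2 (psi : C) (y : 'I_6 -> C) : C :=
  psi * (cx y 1 * cx y 2 * cx y 3) + cx y 4 ^+ 3 + cx y 5 ^+ 3 + cx y 6 ^+ 3.
Definition Y_LT (psi : C) (y : 'I_6 -> C) : Prop :=
  nonexc Wm y /\ q1 psi y = 0 /\ q2 psi y = 0.

(** The j-th column of W is the (iota j)-th column of Lambda
    (1-based: 1,2,3,4,5,6 |-> 7,8,9,4,5,6). *)
Definition iota (j : 'I_6) : 'I_12 := inord (nth 0%N [:: 6; 7; 8; 3; 4; 5]%N j).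

(** The toric morphism phi : XX -> X (identity on N) in Cox coordinates.
    Writing v_1 = w_1 + (w_4+w_5+w_6)/3, ..., v_10 = w_4 + (w_1+w_2+w_3)/3, ...,
    a lift of phi is y_j = x_{iota j} * prod_e x_e^{c_{ej}} with fractional
    exponents; it is well defined on G-orbits for any choice of cube roots
    a^3 = x10 x11 x12, b^3 = x1 x2 x3. *)
Definition phi_lift (x : 'I_12 -> C) (a b : C) : 'I_6 -> C :=
  fun j => nth 0 [:: cx x 1 * cx x 7 * a; cx x 2 * cx x 8 * a; cx x 3 * cx x 9 * a;
                    cx x 10 * cx x 4 * b; cx x 11 * cx x 5 * b; cx x 12 * cx x 6 * b] j.

Definition phi_preimage (T : ('I_6 -> C) -> Prop) (x : 'I_12 -> C) : Prop :=
  nonexc Lambda x /\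
  exists a b : C, a ^+ 3 = cx x 10 * cx x 11 * cx x 12 /\
                  b ^+ 3 = cx x 1 * cx x 2 * cx x 3 /\ T (phi_lift x a b).

(** The open set U of X over which phi is an isomorphism: the union of the
    torus orbits O(tau) for the cones tau of the fan of X that are also cones
    of the fan of XX.  The orbit of [y] is O(cone(w_j : y_j = 0)). *)
Definition U_iso (y : 'I_6 -> C) : Prop :=
  nonexc Wm y /\ face_set Lambda [set iota j | j in [set j | y j == 0]].

Definition strict_transform (Y : ('I_6 -> C) -> Prop) : ('I_12 -> C) -> Prop :=
  tclosure Lambda (phi_preimage (fun y => U_iso y /\ Y y)).

(* Main.v *)
Require Import Defs.
From HB Require Import structures.
From mathcomp Require Import all_boot all_order all_algebra.
From mathcomp Require Import complex Rstruct.
From mathcomp Require Import ring lra.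
From mathcomp Require Import mpoly.
From Stdlib Require Import FunctionalExtensionality.
Import Order.TTheory GRing.Theory Num.Theory.
Set Implicit Arguments. Unset Strict Implicit. Unset Printing Implicit Defensive.
Local Open Scope ring_scope.

Local Open Scope complex_scope.

Import ComplexField.Normc.
Definition nc (z : C) : RR := normc z.

Lemma nc_ge0 z : 0 <= nc z.
Proof. by case: z => a b; rewrite /nc /normc sqrtr_ge0. Qed.
Lemma ncM a b : nc (a * b) = nc a * nc b.
Proof. exact: normcM. Qed.
Lemma ncD a b : nc (a + b) <= nc a + nc b.
Proof. exact: le_normcD. Qed.
Lemma ncN a : nc (- a) = nc a.
Proof. exact: normcN. Qed.
Lemma nc0 : nc 0 = 0.
Proof. exact: normc0. Qed.
Lemma nc_eq0 a : nc a = 0 -> a = 0.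
Proof. exact: eq0_normc. Qed.
Lemma nc_real (r : RR) : nc (r%:C) = `|r|.
Proof. by rewrite /nc /normc /= expr0n addr0 sqrtr_sqr. Qed.
Lemma ncX a n : nc (a ^+ n) = nc a ^+ n.
Proof. elim: n => [|n IH]; first by rewrite !expr0 /nc normc1.
by rewrite !exprS ncM IH. Qed.

Lemma prod_bound (x0 : C) (d : RR) (s : seq C) : 0 <= d ->
  (forall z, z \in s -> d <= nc (z - x0)) ->
  d ^+ (size s) <= nc (\prod_(z <- s) (x0 - z)).
Proof.
move=> d0; elim: s => [|z s IH] H.
  by rewrite big_nil expr0 /nc normc1.
rewrite big_cons ncM /= exprS.
have h1 : d <= nc (x0 - z) by rewrite -ncN opprB; apply: H; rewrite inE eqxx.
have h2 : d ^+ size s <= nc (\prod_(z <- s) (x0 - z)).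
  by apply: IH => w wi; apply: H; rewrite inE wi orbT.
apply: ler_pM => //; exact: exprn_ge0.
Qed.

Lemma cubic_near (a b c x0 : C) (d : RR) : a != 0 -> 0 < d ->
  nc (a * x0 ^+ 3 + b * x0 + c) < nc a * d ^+ 3 ->
  exists r, a * r ^+ 3 + b * r + c = 0 /\ nc (r - x0) < d.
Proof.
move=> a0 d0 Hlt.
pose P : {poly C} := a *: 'X^3 + (b *: 'X + c%:P).
have HP : forall z, P.[z] = a * z ^+ 3 + b * z + c.
  by move=> z; rewrite /P hornerD hornerZ hornerXn hornerD hornerZ hornerX hornerC addrA.
have slow : (size (b *: 'X + c%:P : {poly C})%R < size (a *: 'X^3 : {poly C})%R)%N.
  rewrite size_scale // size_polyXn.
  apply: (leq_ltn_trans (size_polyD _ _)).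
  rewrite gtn_max (leq_ltn_trans (size_scale_leq _ _)) ?size_polyX //.
  by rewrite (leq_ltn_trans (size_polyC_leq1 _)).
have sP : size P = 4%N by rewrite /P size_polyDl // size_scale // size_polyXn.
have lP : lead_coef P = a by rewrite /P lead_coefDl // lead_coefZ lead_coefXn mulr1.
have [rs Hrs] := closed_field_poly_normal P.
rewrite lP in Hrs.
have srs : size rs = 3%N.
  by move: sP; rewrite Hrs size_scale // size_prod_XsubC => -[].
have Hroot : forall z, z \in rs -> P.[z] = 0.
  move=> z zi; rewrite Hrs hornerZ.
  have := root_prod_XsubC rs z; rewrite zi => /rootP ->; by rewrite mulr0.
case: (boolP (has (fun z => nc (z - x0) < d) rs)) => [/hasP [z zi lt] | /hasPn H].
  by exists z; split => //; rewrite -HP Hroot.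
exfalso.
have H' : forall z, z \in rs -> d <= nc (z - x0).
  by move=> z /H; rewrite leNgt.
have := @prod_bound x0 d rs (ltW d0) H'; rewrite srs => Hb.
move: Hlt; rewrite -HP Hrs hornerZ horner_prod ncM.
under eq_bigr do rewrite hornerXsubC.
move=> Hlt.
have na : 0 <= nc a by apply: nc_ge0.
have : nc a * d ^+ 3 <= nc a * nc (\prod_(i <- rs) (x0 - i)) by apply: ler_wpM2l.
lra.
Qed.

Ltac clearC := repeat match goal with
  | h : @eq ?T _ _ |- _ => tryif unify T (RR : Type) then fail else clear h
  | h : is_true (~~ (_ == _)) |- _ => clear h
  | h : is_true (_ == _) |- _ => clear h
  end.
Ltac rlra := clearC; lra.
Ltac rnra := clearC; nra.

Definition lip (n : nat) (x : 'I_n -> C) (g : ('I_n -> C) -> C) :=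
  exists K : RR, 0 <= K /\ forall (z : 'I_n -> C) (d : RR), 0 <= d -> d <= 1 ->
    (forall i, nc (z i - x i) <= d) -> nc (g z - g x) <= K * d.

Arguments lip {n}.
Section Lip.
Variables (n : nat) (x : 'I_n -> C).

Lemma lip_ext {g h} : lip x g -> (forall z, g z = h z) -> lip x h.
Proof.
move=> [K [K0 HK]] E; exists K; split => // z d d0 d1 Hz.
by rewrite -!E; apply: HK.
Qed.

Lemma lip_const c : lip x (fun _ => c).
Proof. exists 0; split => // z d d0 d1 _; rewrite subrr nc0 mul0r. done. Qed.

Lemma lip_coord i : lip x (fun z => z i).
Proof. exists 1; split => // z d d0 d1 Hz; rewrite mul1r; exact: Hz. Qed.

Lemma lip_add {g h} : lip x g -> lip x h -> lip x (fun z => g z + h z).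
Proof.
move=> [K1 [K10 H1]] [K2 [K20 H2]]; exists (K1 + K2); split; first lra.
move=> z d d0 d1 Hz.
have -> : g z + h z - (g x + h x) = (g z - g x) + (h z - h x) by ring.
have := ncD (g z - g x) (h z - h x).
have := H1 z d d0 d1 Hz; have := H2 z d d0 d1 Hz. lra.
Qed.

Lemma lip_mul {g h} : lip x g -> lip x h -> lip x (fun z => g z * h z).
Proof.
move=> [K1 [K10 H1]] [K2 [K20 H2]].
exists ((nc (g x) + K1) * K2 + nc (h x) * K1); split.
  have := nc_ge0 (g x); have := nc_ge0 (h x); nra.
move=> z d d0 d1 Hz.
have -> : g z * h z - g x * h x = g z * (h z - h x) + h x * (g z - g x) by ring.
have e1 := ncD (g z * (h z - h x)) (h x * (g z - g x)).
rewrite !ncM in e1.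
have b1 := H1 z d d0 d1 Hz; have b2 := H2 z d d0 d1 Hz.
have gz : nc (g z) <= nc (g x) + K1 * d.
  have -> : g z = g x + (g z - g x) by ring.
  have := ncD (g x) (g z - g x). 
  lra.
have p1 := nc_ge0 (g z); have p2 := nc_ge0 (h z - h x);
have p3 := nc_ge0 (h x); have p4 := nc_ge0 (g z - g x); have p5 := nc_ge0 (g x).
have q1 : nc (g z) * nc (h z - h x) <= (nc (g x) + K1) * (K2 * d).
  apply: ler_pM => //; nra.
have q2 : nc (h x) * nc (g z - g x) <= nc (h x) * (K1 * d) by apply: ler_wpM2l.
nra.
Qed.

Lemma lip_exp {g} k : lip x g -> lip x (fun z => g z ^+ k).
Proof.
move=> Hg; elim: k => [|k IH].
  by apply: (lip_ext (lip_const 1)) => z; rewrite expr0.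
by apply: (lip_ext (lip_mul Hg IH)) => z; rewrite exprS.
Qed.

Lemma lip_sum (I : Type) (s : seq I) (F : I -> ('I_n -> C) -> C) :
  (forall i, lip x (F i)) -> lip x (fun z => \sum_(i <- s) F i z).
Proof.
move=> HF; elim: s => [|i s IH].
  by apply: (lip_ext (lip_const 0)) => z; rewrite big_nil.
by apply: (lip_ext (lip_add (HF i) IH)) => z; rewrite big_cons.
Qed.

Lemma lip_prod (I : Type) (s : seq I) (F : I -> ('I_n -> C) -> C) :
  (forall i, lip x (F i)) -> lip x (fun z => \prod_(i <- s) F i z).
Proof.
move=> HF; elim: s => [|i s IH].
  by apply: (lip_ext (lip_const 1)) => z; rewrite big_nil.
by apply: (lip_ext (lip_mul (HF i) IH)) => z; rewrite big_cons.
Qed.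

Lemma lip_meval (f : mpoly.mpoly n C) : lip x (fun z => mpoly.meval z f).
Proof.
have E : forall z, \sum_(m <- mpoly.msupp f) mpoly.mcoeff m f * \prod_i z i ^+ m i = mpoly.meval z f.
  by move=> z; rewrite mpoly.mevalE.
apply: (lip_ext _ E).
apply: lip_sum => m; apply: lip_mul; first exact: lip_const.
rewrite /index_enum. apply: lip_prod => i. apply: lip_exp; exact: lip_coord.
Qed.

Lemma lip_zero g : lip x g ->
  (forall d : RR, 0 < d -> exists z, g z = 0 /\ forall i, nc (z i - x i) <= d) ->
  g x = 0.
Proof.
move=> [K [K0 HK]] Hd.
case: (boolP (g x == 0)) => [/eqP //| gx0].
have ng : 0 < nc (g x).
  rewrite lt_neqAle nc_ge0 andbT eq_sym; apply/eqP => /nc_eq0 /eqP; exact/negP.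
pose d := nc (g x) / (nc (g x) + K + 1).
have den : 0 < nc (g x) + K + 1 by lra.
have d0 : 0 < d by apply: divr_gt0.
have d1 : d <= 1 by rewrite ler_pdivrMr // mul1r; lra.
have Kd : K * d < nc (g x).
  rewrite /d mulrA ltr_pdivrMr //; nra.
have [z [gz Hz]] := Hd d d0.
have := HK z d (ltW d0) d1 Hz; rewrite gz sub0r ncN; clear gz Hz HK Hd gx0 => H; exfalso; lra.
Qed.
End Lip.

Definition sl (u0 u1 u2 u3 u4 : RR) : seq RR :=
  [:: 2*u0-u1-u2; -u0+2*u1-u2; -u0-u1+2*u2; -u0-u1-u2+3*u3; -u0-u1-u2+3*u4;
      -u0-u1-u2; 3*u0-u3-u4; 3*u1-u3-u4; 3*u2-u3-u4; 2*u3-u4; -u3+2*u4; -u3-u4].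

Lemma sv_expl (u0 u1 u2 u3 u4 : RR) (i : 'I_12) :
  \sum_(k < 5) (nth 0 [:: u0; u1; u2; u3; u4] k) * (Lambda k i)%:~R =
  nth 0 (sl u0 u1 u2 u3 u4) i.
Proof.
case: i => [[|[|[|[|[|[|[|[|[|[|[|[|i]]]]]]]]]]]] Hi] //;
  rewrite !big_ord_recr big_ord0 /= !mxE /=; lra.
Qed.

Lemma u_nth (u : 'I_5 -> RR) (k : 'I_5) :
  u k = nth 0 [:: u (inord 0); u (inord 1); u (inord 2); u (inord 3); u (inord 4)] k.
Proof.
case: k => [[|[|[|[|[|k]]]]] Hk] //=; congr u; apply: val_inj; by rewrite /= inordK.
Qed.

Lemma face_facts (I : {set 'I_12}) : face_set Lambda I ->
  exists u0 u1 u2 u3 u4 : RR, forall n, (n < 12)%N ->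
    ((inord n : 'I_12) \in I -> nth 0 (sl u0 u1 u2 u3 u4) n = 1) /\
    nth 0 (sl u0 u1 u2 u3 u4) n <= 1.
Proof.
move=> [u [H1 H2]].
exists (u (inord 0)), (u (inord 1)), (u (inord 2)), (u (inord 3)), (u (inord 4)).
move=> n Hn.
have E : \sum_(k < 5) u k * (Lambda k (inord n))%:~R =
         nth 0 (sl (u (inord 0)) (u (inord 1)) (u (inord 2)) (u (inord 3)) (u (inord 4))) n.
  rewrite -[in RHS](@inordK 11 n) // -sv_expl.
  by apply: eq_bigr => k _; rewrite -u_nth.
rewrite -E; split; first exact: H1.
case: (boolP ((inord n : 'I_12) \in I)) => h; first by rewrite H1.
exact: ltW (H2 _ h).
Qed.

Lemma nonexc_facts (x : 'I_12 -> C) : nonexc Lambda x ->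
  exists u0 u1 u2 u3 u4 : RR, forall n, (n < 12)%N ->
    (cx x n.+1 = 0 -> nth 0 (sl u0 u1 u2 u3 u4) n = 1) /\
    nth 0 (sl u0 u1 u2 u3 u4) n <= 1.
Proof.
move=> [I [HI Hz]]; have [u0 [u1 [u2 [u3 [u4 F]]]]] := @face_facts I HI.
exists u0, u1, u2, u3, u4 => n Hn; have [F1 F2] := F n Hn; split => // h.
by apply: F1; apply: Hz.
Qed.

Ltac getS F :=
  pose proof (proj2 (F 0%N isT)) as s0; pose proof (proj2 (F 1%N isT)) as s1; pose proof (proj2 (F 2%N isT)) as s2; pose proof (proj2 (F 3%N isT)) as s3; pose proof (proj2 (F 4%N isT)) as s4; pose proof (proj2 (F 5%N isT)) as s5; pose proof (proj2 (F 6%N isT)) as s6; pose proof (proj2 (F 7%N isT)) as s7; pose proof (proj2 (F 8%N isT)) as s8; pose proof (proj2 (F 9%N isT)) as s9; pose proof (proj2 (F 10%N isT)) as s10; pose proof (proj2 (F 11%N isT)) as s11;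
  simpl in s0, s1, s2, s3, s4, s5, s6, s7, s8, s9, s10, s11.



Ltac useZ Z := repeat match goal with h : cx _ ?k = 0 |- _ =>
  let H := fresh "z" in pose proof (Z k h isT) as H; simpl in H; symmetry in h end.

Lemma nondeg1 psi x : psi != 0 -> nonexc Lambda x -> p1 psi x = 0 ->
  (cx x 1 != 0 /\ cx x 7 != 0) \/ (cx x 2 != 0 /\ cx x 8 != 0) \/
  (cx x 3 != 0 /\ cx x 9 != 0).
Proof.
move=> psi0 Hx Hp.
have [u0 [u1 [u2 [u3 [u4 F]]]]] := nonexc_facts Hx.
getS F.
have Z k : cx x k = 0 -> (0 < k <= 12)%N -> nth 0 (sl u0 u1 u2 u3 u4) k.-1 = 1.
  by case: k => // k h Hn; case: (F k Hn) => /(_ h).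
case: (eqVneq (cx x 1) 0) => h1; case: (eqVneq (cx x 7) 0) => h7;
  try by left.
all: case: (eqVneq (cx x 2) 0) => h2; case: (eqVneq (cx x 8) 0) => h8;
  try by right; left.
all: case: (eqVneq (cx x 3) 0) => h3; case: (eqVneq (cx x 9) 0) => h9;
  try by right; right.
all: exfalso; useZ Z.
all: try (rlra; fail).
have nz j : (0 < j <= 6)%N -> cx x j != 0.
  case: j => [|[|[|[|[|[|[|j]]]]]]] //= _; apply/eqP => hj;
  have := Z _ hj isT; simpl; rlra.
move: Hp; rewrite /p1 -h7 -h8 -h9 !expr0n /= !mulr0 !add0r => /eqP.
rewrite !mulf_eq0 (negbTE psi0) (negbTE (nz 1 isT)) (negbTE (nz 2 isT)) (negbTE (nz 3 isT)) (negbTE (nz 4 isT)) (negbTE (nz 5 isT)) (negbTE (nz 6 isT)) //.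
Qed.

Lemma nondeg2 psi x : psi != 0 -> nonexc Lambda x -> p2 psi x = 0 ->
  (cx x 4 != 0 /\ cx x 10 != 0) \/ (cx x 5 != 0 /\ cx x 11 != 0) \/
  (cx x 6 != 0 /\ cx x 12 != 0).
Proof.
move=> psi0 Hx Hp.
have [u0 [u1 [u2 [u3 [u4 F]]]]] := nonexc_facts Hx.
getS F.
have Z k : cx x k = 0 -> (0 < k <= 12)%N -> nth 0 (sl u0 u1 u2 u3 u4) k.-1 = 1.
  by case: k => // k h Hn; case: (F k Hn) => /(_ h).
case: (eqVneq (cx x 4) 0) => hA; case: (eqVneq (cx x 10) 0) => hB;
  try by left.
all: case: (eqVneq (cx x 5) 0) => hC; case: (eqVneq (cx x 11) 0) => hD;
  try by right; left.
all: case: (eqVneq (cx x 6) 0) => hE; case: (eqVneq (cx x 12) 0) => hF;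
  try by right; right.
all: exfalso; useZ Z.
all: try (rlra; fail).
have nz j : (6 < j <= 12)%N -> cx x j != 0.
  case: j => [|[|[|[|[|[|[|[|[|[|[|[|[|j]]]]]]]]]]]]] //= _; apply/eqP => hj;
  have := Z _ hj isT; simpl; rlra.
move: Hp; rewrite /p2 -hA -hC -hE !expr0n /= !mul0r !add0r => /eqP.
rewrite !mulf_eq0 (negbTE psi0) (negbTE (nz 7 isT)) (negbTE (nz 8 isT)) (negbTE (nz 9 isT)) (negbTE (nz 10 isT)) (negbTE (nz 11 isT)) (negbTE (nz 12 isT)) //.
Qed.

Lemma q1_id (x1 x2 x3 x4 x5 x6 x7 x8 x9 x10 x11 x12 a b psi : C) :
  b ^+ 3 = x1 * x2 * x3 -> a ^+ 3 = x10 * x11 * x12 ->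
  (x1 * x7 * a) ^+ 3 + (x2 * x8 * a) ^+ 3 + (x3 * x9 * a) ^+ 3
   + psi * ((x10 * x4 * b) * (x11 * x5 * b) * (x12 * x6 * b)) =
  a ^+ 3 * (x1 ^+ 3 * x7 ^+ 3 + x2 ^+ 3 * x8 ^+ 3 + x3 ^+ 3 * x9 ^+ 3
   + psi * (x1 * x2 * x3 * x4 * x5 * x6)).
Proof.
move=> hb ha.
have -> : (x1 * x7 * a) ^+ 3 + (x2 * x8 * a) ^+ 3 + (x3 * x9 * a) ^+ 3
   + psi * ((x10 * x4 * b) * (x11 * x5 * b) * (x12 * x6 * b)) =
   a ^+ 3 * (x1 ^+ 3 * x7 ^+ 3 + x2 ^+ 3 * x8 ^+ 3 + x3 ^+ 3 * x9 ^+ 3)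
   + psi * (x4 * x5 * x6 * x10 * x11 * x12) * b ^+ 3 by ring.
rewrite hb ha; ring.
Qed.

Lemma q2_id (x1 x2 x3 x4 x5 x6 x7 x8 x9 x10 x11 x12 a b psi : C) :
  b ^+ 3 = x1 * x2 * x3 -> a ^+ 3 = x10 * x11 * x12 ->
  psi * ((x1 * x7 * a) * (x2 * x8 * a) * (x3 * x9 * a)) +
  (x10 * x4 * b) ^+ 3 + (x11 * x5 * b) ^+ 3 + (x12 * x6 * b) ^+ 3 =
  b ^+ 3 * (x4 ^+ 3 * x10 ^+ 3 + x5 ^+ 3 * x11 ^+ 3 + x6 ^+ 3 * x12 ^+ 3
   + psi * (x7 * x8 * x9 * x10 * x11 * x12)).
Proof.
move=> hb ha.
have -> : psi * ((x1 * x7 * a) * (x2 * x8 * a) * (x3 * x9 * a)) +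
  (x10 * x4 * b) ^+ 3 + (x11 * x5 * b) ^+ 3 + (x12 * x6 * b) ^+ 3 =
  b ^+ 3 * (x4 ^+ 3 * x10 ^+ 3 + x5 ^+ 3 * x11 ^+ 3 + x6 ^+ 3 * x12 ^+ 3)
  + psi * (x1 * x2 * x3 * x7 * x8 * x9) * a ^+ 3 by ring.
rewrite hb ha; ring.
Qed.

Lemma cx_phi z a b k : (0 < k <= 6)%N -> cx (phi_lift z a b) k =
  nth 0 [:: cx z 1 * cx z 7 * a; cx z 2 * cx z 8 * a; cx z 3 * cx z 9 * a;
            cx z 10 * cx z 4 * b; cx z 11 * cx z 5 * b; cx z 12 * cx z 6 * b] k.-1.
Proof.
case: k => // k /= Hk; rewrite /cx /phi_lift /= inordK //.
Qed.

Lemma q1_phi psi z a b : b ^+ 3 = cx z 1 * cx z 2 * cx z 3 ->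
  a ^+ 3 = cx z 10 * cx z 11 * cx z 12 ->
  q1 psi (phi_lift z a b) = a ^+ 3 * p1 psi z.
Proof.
move=> hb ha; rewrite /q1 !cx_phi //=; exact: q1_id.
Qed.

Lemma q2_phi psi z a b : b ^+ 3 = cx z 1 * cx z 2 * cx z 3 ->
  a ^+ 3 = cx z 10 * cx z 11 * cx z 12 ->
  q2 psi (phi_lift z a b) = b ^+ 3 * p2 psi z.
Proof.
move=> hb ha; rewrite /q2 !cx_phi //=; exact: q2_id.
Qed.

Lemma memI (Y : 'I_6 -> C) (j : nat) : (j < 6)%N -> cx Y j.+1 = 0 ->
  (inord (nth 0%N [:: 6; 7; 8; 3; 4; 5]%N j) : 'I_12) \in
    [set Defs.iota i | i in [set i | Y i == 0]].
Proof.
move=> Hj h; apply/imsetP; exists (inord j); first by rewrite inE; apply/eqP.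
by rewrite /Defs.iota inordK.
Qed.

Lemma pre_sub psi y : phi_preimage (fun y => U_iso y /\ Y_LT psi y) y -> Y_BB psi y.
Proof.
move=> [Hn [a [b [ha [hb [[_ HU] [_ [H1 H2]]]]]]]].
have [u0 [u1 [u2 [u3 [u4 F]]]]] := face_facts HU.
set Y := phi_lift y a b in F H1 H2.
have Z j : (j < 6)%N -> cx Y j.+1 = 0 ->
    nth 0 (sl u0 u1 u2 u3 u4) (nth 0%N [:: 6; 7; 8; 3; 4; 5]%N j) = 1.
  move=> Hj h; have Hm := memI Hj h.
  have Hk : (nth 0%N [:: 6; 7; 8; 3; 4; 5]%N j < 12)%N.
    by case: j Hj {h Hm} => [|[|[|[|[|[|j]]]]]].
  by case: (F _ Hk) => /(_ Hm).
getS F.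
have cY := cx_phi y a b.
have a0 : a != 0.
  apply/eqP => a0; move: ha; rewrite a0 expr0n /= => /eqP; rewrite eq_sym.
  rewrite !mulf_eq0 -!orbA => /or3P [] /eqP h.
  - have := Z 0%N isT; rewrite cY //= a0 mulr0 => /(_ erefl).
    have := Z 1%N isT; rewrite cY //= a0 mulr0 => /(_ erefl).
    have := Z 2%N isT; rewrite cY //= a0 mulr0 => /(_ erefl).
    have := Z 3%N isT; rewrite cY //= h mul0r mul0r => /(_ erefl).
    simpl; rlra.
  - have := Z 0%N isT; rewrite cY //= a0 mulr0 => /(_ erefl).
    have := Z 1%N isT; rewrite cY //= a0 mulr0 => /(_ erefl).
    have := Z 2%N isT; rewrite cY //= a0 mulr0 => /(_ erefl).
    have := Z 4%N isT; rewrite cY //= h mul0r mul0r => /(_ erefl).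
    simpl; rlra.
  - have := Z 0%N isT; rewrite cY //= a0 mulr0 => /(_ erefl).
    have := Z 1%N isT; rewrite cY //= a0 mulr0 => /(_ erefl).
    have := Z 2%N isT; rewrite cY //= a0 mulr0 => /(_ erefl).
    have := Z 5%N isT; rewrite cY //= h mul0r mul0r => /(_ erefl).
    simpl; rlra.
have b0 : b != 0.
  apply/eqP => b0; move: hb; rewrite b0 expr0n /= => /eqP; rewrite eq_sym.
  rewrite !mulf_eq0 -!orbA => /or3P [] /eqP h.
  - have := Z 3%N isT; rewrite cY //= b0 mulr0 => /(_ erefl).
    have := Z 4%N isT; rewrite cY //= b0 mulr0 => /(_ erefl).
    have := Z 5%N isT; rewrite cY //= b0 mulr0 => /(_ erefl).
    have := Z 0%N isT; rewrite cY //= h mul0r mul0r => /(_ erefl).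
    simpl; rlra.
  - have := Z 3%N isT; rewrite cY //= b0 mulr0 => /(_ erefl).
    have := Z 4%N isT; rewrite cY //= b0 mulr0 => /(_ erefl).
    have := Z 5%N isT; rewrite cY //= b0 mulr0 => /(_ erefl).
    have := Z 1%N isT; rewrite cY //= h mul0r mul0r => /(_ erefl).
    simpl; rlra.
  - have := Z 3%N isT; rewrite cY //= b0 mulr0 => /(_ erefl).
    have := Z 4%N isT; rewrite cY //= b0 mulr0 => /(_ erefl).
    have := Z 5%N isT; rewrite cY //= b0 mulr0 => /(_ erefl).
    have := Z 2%N isT; rewrite cY //= h mul0r mul0r => /(_ erefl).
    simpl; rlra.
split => //; split.
  by move: H1; rewrite /Y q1_phi // => /eqP; rewrite mulf_eq0 expf_eq0 /= (negbTE a0) => /eqP.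
by move: H2; rewrite /Y q2_phi // => /eqP; rewrite mulf_eq0 expf_eq0 /= (negbTE b0) => /eqP.
Qed.

Lemma small (s : seq RR) : all (fun e => 0 < e) s ->
  exists t, 0 < t /\ all (fun e => t <= e) s.
Proof.
elim: s => [|e s IH] /=; first by exists 1.
move=> /andP [e0 /IH [t [t0 Ht]]].
exists (Order.min e t); rewrite lt_min e0 t0 /= ge_min lexx /=.
split => //; apply/allP => f fi; rewrite ge_min; apply/orP; right.
exact: (allP Ht).
Qed.

Lemma nc_gt0 z : z != 0 -> 0 < nc z.
Proof.
move=> z0; rewrite lt_neqAle nc_ge0 andbT eq_sym; apply/eqP => /nc_eq0 /eqP.
exact/negP.
Qed.

Lemma ncB a b : nc (a - b) = nc (b - a).
Proof. by rewrite -ncN opprB. Qed.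

Lemma nc_tri a b : nc a <= nc b + nc (a - b).
Proof. by have := ncD b (a - b); rewrite addrC subrK. Qed.

Lemma root_near (x : 'I_12 -> C) a b c (x0 : C) :
  lip x a -> lip x b -> lip x c -> a x != 0 -> x0 != 0 ->
  a x * x0 ^+ 3 + b x * x0 + c x = 0 ->
  forall dl : RR, 0 < dl -> exists eta : RR, 0 < eta /\
    forall z, (forall i, nc (z i - x i) <= eta) ->
      exists r, a z * r ^+ 3 + b z * r + c z = 0 /\ nc (r - x0) <= dl /\ r != 0.
Proof.
move=> La Lb Lc ax0 x00 hx dl dl0.
have LH : lip x (fun z => a z * x0 ^+ 3 + b z * x0 + c z).
  apply: lip_add; last exact: Lc.
  by apply: lip_add; apply: lip_mul => //; apply: lip_const.
have [Ka [Ka0 HKa]] := La; have [Kh [Kh0 HKh]] := LH.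
have A0 := nc_gt0 ax0; have X0 := nc_gt0 x00.
have [dl' [dl'0 /and3P [dl'1 dl'2 _]]] :=
  @small [:: dl; nc x0 / 2] ltac:(rewrite /= dl0 divr_gt0 //).
have dl3 : 0 < dl' ^+ 3 by rewrite exprn_gt0.
have [eta [eta0 /and4P [e1 e2 e3 _]]] :=
  @small [:: 1; nc (a x) / (2 * (Ka + 1)); nc (a x) * dl' ^+ 3 / (4 * (Kh + 1))]
  ltac:(rewrite /= ltr01 !divr_gt0 ?mulr_gt0 //; rlra).
exists eta; split => // z Hz.
have ha := HKa z eta (ltW eta0) e1 Hz.
have hh := HKh z eta (ltW eta0) e1 Hz.
rewrite hx subr0 in hh.
have Kae : Ka * eta <= nc (a x) / 2.
  have : Ka * eta <= Ka * (nc (a x) / (2 * (Ka + 1))) by apply: ler_wpM2l.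
  set q := nc (a x) / (2 * (Ka + 1)).
  have hq : q * (2 * (Ka + 1)) = nc (a x) by rewrite /q divfK //; rlra.
  have q0 : 0 <= q by rewrite /q divr_ge0 //; rlra.
  rnra.
have az : nc (a x) / 2 <= nc (a z).
  have := nc_tri (a x) (a z); rewrite ncB; rlra.
have az0 : a z != 0.
  apply/eqP => h; move: az; rewrite h nc0; rlra.
have Khe : Kh * eta < nc (a x) * dl' ^+ 3 / 2.
  have : Kh * eta <= Kh * (nc (a x) * dl' ^+ 3 / (4 * (Kh + 1))) by apply: ler_wpM2l.
  set q := nc (a x) * dl' ^+ 3 / (4 * (Kh + 1)).
  have hq : q * (4 * (Kh + 1)) = nc (a x) * dl' ^+ 3 by rewrite /q divfK //; rlra.
  have q0 : 0 < q by rewrite /q divr_gt0 ?mulr_gt0 //; rlra.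
  have Ad : 0 < nc (a x) * dl' ^+ 3 by rewrite mulr_gt0.
  rnra.
have bnd : nc (a z * x0 ^+ 3 + b z * x0 + c z) < nc (a z) * dl' ^+ 3.
  have : nc (a x) / 2 * dl' ^+ 3 <= nc (a z) * dl' ^+ 3 by apply: ler_wpM2r => //; exact: ltW.
  rnra.
have [r [hr hr']] := cubic_near az0 dl'0 bnd.
exists r; split => //; split; first by rlra.
apply/eqP => r0; move: hr'; rewrite r0 sub0r ncN; rlra.
Qed.

Definition upd (z : 'I_12 -> C) (k : 'I_12) (v : C) : 'I_12 -> C :=
  fun i => if i == k then v else z i.

Lemma cx_upd z k v j : (j.-1 < 12)%N -> (k < 12)%N ->
  cx (upd z (inord k) v) j = if j.-1 == k then v else cx z j.
Proof.
move=> hj hk; rewrite /cx /upd.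
have -> : (inord j.-1 == inord k :> 'I_12) = (j.-1 == k).
  by rewrite -val_eqE /= !inordK.
by [].
Qed.

Definition S0 (psi : C) (z : 'I_12 -> C) :=
  (forall i, z i != 0) /\ p1 psi z = 0 /\ p2 psi z = 0.

Lemma density_case psi (x : 'I_12 -> C) (k1 k2 : nat) a1 b1 c1 a2 b2 c2 :
  (k1 < 12)%N -> (k2 < 12)%N ->
  (forall z X, p1 psi (upd z (inord k1) X) = a1 z * X ^+ 3 + b1 z * X + c1 z) ->
  (forall z X, p2 psi (upd z (inord k2) X) = a2 z * X ^+ 3 + b2 z * X + c2 z) ->
  (forall z X, p1 psi (upd z (inord k2) X) = p1 psi z) ->
  lip x a1 -> lip x b1 -> lip x c1 -> lip x a2 -> lip x b2 -> lip x c2 ->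
  a1 x != 0 -> a2 x != 0 -> x (inord k1) != 0 -> x (inord k2) != 0 ->
  p1 psi x = 0 -> p2 psi x = 0 ->
  forall d : RR, 0 < d -> exists z, S0 psi z /\ forall i, nc (z i - x i) <= d.
Proof.
move=> hk1 hk2 H1 H2 I1 La1 Lb1 Lc1 La2 Lb2 Lc2 a1x a2x xk1 xk2 hp1 hp2 d d0.
have updK z k : upd z k (z k) = z.
  by apply: functional_extensionality => i; rewrite /upd; case: eqP => // ->.
have r1x : a1 x * x (inord k1) ^+ 3 + b1 x * x (inord k1) + c1 x = 0.
  by rewrite -H1 updK.
have r2x : a2 x * x (inord k2) ^+ 3 + b2 x * x (inord k2) + c2 x = 0.
  by rewrite -H2 updK.
have [eta2 [eta20 R2]] := root_near La2 Lb2 Lc2 a2x xk2 r2x d0.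
have [dl1 [dl10 /and3P [dl1d dl1e _]]] := @small [:: d; eta2] ltac:(by rewrite /= d0 eta20).
have [eta1 [eta10 R1]] := root_near La1 Lb1 Lc1 a1x xk1 r1x dl10.
pose e (i : 'I_12) : RR := if x i == 0 then 1 else nc (x i) / 2.
have e0 i : 0 < e i.
  rewrite /e; case: eqP => [_|/eqP h]; first exact: ltr01.
  by rewrite divr_gt0 // nc_gt0.
have [tau [tau0 Ht]] := @small ([:: d; eta1; eta2; dl1] ++ map e (enum 'I_12))
  ltac:(by rewrite all_cat /= d0 eta10 eta20 dl10 /=; apply/allP => y /mapP [i _ ->]).
rewrite all_cat /= in Ht; case/andP: Ht => /and5P [td te1 te2 tdl _] Ht.
have te i : tau <= e i by apply: (allP Ht); apply: map_f; rewrite mem_enum.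
pose t : C := (tau%:C)%C.
have nt : nc t = tau by rewrite /t nc_real ger0_norm // ltW.
pose w := fun i => x i + t.
have dw i : nc (w i - x i) = tau by rewrite /w addrC addKr.
have Dw1 i : nc (w i - x i) <= eta1 by rewrite dw.
have [r1 [hr1 [cr1 nr1]]] := R1 w Dw1.
pose z' := upd w (inord k1) r1.
have Dz' i : nc (z' i - x i) <= eta2.
  rewrite /z' /upd; case: eqP => [->|_]; last by rewrite dw.
  exact: le_trans cr1 dl1e.
have [r2 [hr2 [cr2 nr2]]] := R2 z' Dz'.
exists (upd z' (inord k2) r2); split; [split; [|split]|].
- move=> i; rewrite /z' /upd; case: ifP => _ //; case: ifP => _ //.
  rewrite /w; case: (eqVneq (x i) 0) => [-> | h].
    rewrite add0r; apply/eqP => /(congr1 nc); rewrite nt nc0; rlra.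
  apply/eqP => h2; have := ncD (x i + t) (- t).
  rewrite addrK h2 nc0 add0r ncN nt => h3.
  have := te i; rewrite /e (negbTE h) => h4.
  have := nc_gt0 h; rlra.
- by rewrite I1 /z' H1.
- by rewrite H2.
- move=> i; rewrite /z' /upd; case: ifP => [/eqP ->|_] //; case: ifP => [/eqP ->|_].
    exact: le_trans cr1 dl1d.
  by rewrite dw.
Qed.

Ltac liptac := repeat first [ apply: lip_coord | apply: lip_const | apply: lip_add
  | apply: lip_exp | apply: lip_mul ].

Definition good1 psi x k1 := exists a1 b1 c1,
  (forall z X, p1 psi (upd z (inord k1) X) = a1 z * X ^+ 3 + b1 z * X + c1 z) /\
  lip x a1 /\ lip x b1 /\ lip x c1 /\ a1 x != 0 /\ x (inord k1) != 0.

Definition good2 psi x k2 := exists a2 b2 c2,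
  (forall z X, p2 psi (upd z (inord k2) X) = a2 z * X ^+ 3 + b2 z * X + c2 z) /\
  lip x a2 /\ lip x b2 /\ lip x c2 /\ a2 x != 0 /\ x (inord k2) != 0 /\
  (forall z X, p1 psi (upd z (inord k2) X) = p1 psi z).

Lemma get_good1 psi x : psi != 0 -> nonexc Lambda x -> p1 psi x = 0 ->
  exists2 k1, (k1 < 12)%N & good1 psi x k1.
Proof.
move=> psi0 Hx Hp; case: (nondeg1 psi0 Hx Hp) => [[h1 h7]|[[h1 h7]|[h1 h7]]].
- exists 0%N => //.
  exists (fun z => cx z 7 ^+ 3), (fun z => psi * (cx z 2 * cx z 3 * cx z 4 * cx z 5 * cx z 6)),
    (fun z => cx z 2 ^+ 3 * cx z 8 ^+ 3 + cx z 3 ^+ 3 * cx z 9 ^+ 3).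
  split; first by move=> z X; rewrite /p1 !cx_upd //=; ring.
  do 3 (split; first by liptac).
  by split; [rewrite expf_neq0 | exact: h1].
- exists 1%N => //.
  exists (fun z => cx z 8 ^+ 3), (fun z => psi * (cx z 1 * cx z 3 * cx z 4 * cx z 5 * cx z 6)),
    (fun z => cx z 1 ^+ 3 * cx z 7 ^+ 3 + cx z 3 ^+ 3 * cx z 9 ^+ 3).
  split; first by move=> z X; rewrite /p1 !cx_upd //=; ring.
  do 3 (split; first by liptac).
  by split; [rewrite expf_neq0 | exact: h1].
- exists 2%N => //.
  exists (fun z => cx z 9 ^+ 3), (fun z => psi * (cx z 1 * cx z 2 * cx z 4 * cx z 5 * cx z 6)),
    (fun z => cx z 1 ^+ 3 * cx z 7 ^+ 3 + cx z 2 ^+ 3 * cx z 8 ^+ 3).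
  split; first by move=> z X; rewrite /p1 !cx_upd //=; ring.
  do 3 (split; first by liptac).
  by split; [rewrite expf_neq0 | exact: h1].
Qed.

Lemma get_good2 psi x : psi != 0 -> nonexc Lambda x -> p2 psi x = 0 ->
  exists2 k2, (k2 < 12)%N & good2 psi x k2.
Proof.
move=> psi0 Hx Hp; case: (nondeg2 psi0 Hx Hp) => [[h1 h7]|[[h1 h7]|[h1 h7]]].
- exists 9%N => //.
  exists (fun z => cx z 4 ^+ 3), (fun z => psi * (cx z 7 * cx z 8 * cx z 9 * cx z 11 * cx z 12)),
    (fun z => cx z 5 ^+ 3 * cx z 11 ^+ 3 + cx z 6 ^+ 3 * cx z 12 ^+ 3).
  split; first by move=> z X; rewrite /p2 !cx_upd //=; ring.
  do 3 (split; first by liptac).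
  split; first by rewrite expf_neq0.
  split; first exact: h7.
  by move=> z X; rewrite /p1 !cx_upd.
- exists 10%N => //.
  exists (fun z => cx z 5 ^+ 3), (fun z => psi * (cx z 7 * cx z 8 * cx z 9 * cx z 10 * cx z 12)),
    (fun z => cx z 4 ^+ 3 * cx z 10 ^+ 3 + cx z 6 ^+ 3 * cx z 12 ^+ 3).
  split; first by move=> z X; rewrite /p2 !cx_upd //=; ring.
  do 3 (split; first by liptac).
  split; first by rewrite expf_neq0.
  split; first exact: h7.
  by move=> z X; rewrite /p1 !cx_upd.
- exists 11%N => //.
  exists (fun z => cx z 6 ^+ 3), (fun z => psi * (cx z 7 * cx z 8 * cx z 9 * cx z 10 * cx z 11)),
    (fun z => cx z 4 ^+ 3 * cx z 10 ^+ 3 + cx z 5 ^+ 3 * cx z 11 ^+ 3).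
  split; first by move=> z X; rewrite /p2 !cx_upd //=; ring.
  do 3 (split; first by liptac).
  split; first by rewrite expf_neq0.
  split; first exact: h7.
  by move=> z X; rewrite /p1 !cx_upd.
Qed.

Lemma density psi x : psi != 0 -> Y_BB psi x ->
  forall d : RR, 0 < d -> exists z, S0 psi z /\ forall i, nc (z i - x i) <= d.
Proof.
move=> psi0 [Hx [hp1 hp2]].
have [k1 hk1 [a1 [b1 [c1 [H1 [La1 [Lb1 [Lc1 [a1x xk1]]]]]]]]] := get_good1 psi0 Hx hp1.
have [k2 hk2 [a2 [b2 [c2 [H2 [La2 [Lb2 [Lc2 [a2x [xk2 I1]]]]]]]]]] := get_good2 psi0 Hx hp2.
exact: (density_case hk1 hk2 H1 H2 I1 La1 Lb1 Lc1 La2 Lb2 Lc2 a1x a2x xk1 xk2 hp1 hp2).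
Qed.


Lemma t_nth (t : 'I_12 -> C) (i : 'I_12) :
  t i = nth 0 [:: cx t 1; cx t 2; cx t 3; cx t 4; cx t 5; cx t 6; cx t 7; cx t 8;
                  cx t 9; cx t 10; cx t 11; cx t 12] i.
Proof.
case: i => [[|[|[|[|[|[|[|[|[|[|[|[|i]]]]]]]]]]]] Hi] //=; rewrite /cx; congr t; apply: val_inj; by rewrite /= inordK.
Qed.



Lemma cx_act (t x : 'I_12 -> C) k : cx (act t x) k = cx t k * cx x k.
Proof. by []. Qed.

Ltac getrow H k :=
  let E := fresh "E" in
  move: (H (@Ordinal 5 k isT));
  under eq_bigr do rewrite t_nth;
  rewrite !big_ord_recr big_ord0 /= !mxE /= -!exprnP !exprN1 ?expr0 mul1r /= => E.

Ltac nzs := repeat (apply/andP; split); try done.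

Lemma G_rel (t : 'I_12 -> C) : in_G Lambda t ->
  let m1 := cx t 1 * cx t 2 * cx t 3 * cx t 4 * cx t 5 * cx t 6 in
  let m2 := cx t 7 * cx t 8 * cx t 9 * cx t 10 * cx t 11 * cx t 12 in
  (cx t 1 ^+ 3 * cx t 7 ^+ 3 = m1 /\ cx t 2 ^+ 3 * cx t 8 ^+ 3 = m1 /\
      cx t 3 ^+ 3 * cx t 9 ^+ 3 = m1) /\ (cx t 4 ^+ 3 * cx t 10 ^+ 3 = m2 /\
      cx t 5 ^+ 3 * cx t 11 ^+ 3 = m2 /\ cx t 6 ^+ 3 * cx t 12 ^+ 3 = m2).
Proof.
move=> [tn H] m1 m2.
have n k : cx t k != 0 by apply: tn.
have n1 := n 1%N; have n2 := n 2%N; have n3 := n 3%N; have n4 := n 4%N;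
have n5 := n 5%N; have n6 := n 6%N; have n7 := n 7%N; have n8 := n 8%N;
have n9 := n 9%N; have n10 := n 10%N; have n11 := n 11%N; have n12 := n 12%N.
getrow H 0%N. getrow H 1%N. getrow H 2%N. getrow H 3%N. getrow H 4%N.
split; [split; [|split]|split; [|split]].
- by rewrite -[m1]mulr1 -E /m1; field; nzs.
- by rewrite -[m1]mulr1 -E0 /m1; field; nzs.
- by rewrite -[m1]mulr1 -E1 /m1; field; nzs.
- by rewrite -[m2]mulr1 -E2 /m2; field; nzs.
- by rewrite -[m2]mulr1 -E3 /m2; field; nzs.
- rewrite -[LHS]mulr1 -{1}[1]mulr1 -{1}[1]mulr1 -{1}[1]mulr1 -{1}[1]mulr1.
  rewrite -{1}E -{1}E0 -{1}E1 -{1}E2 -{1}E3 /m2; field; nzs.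
Qed.

Lemma sum4_id (a b c m P Q R S : C) : a = m -> b = m -> c = m ->
  a * P + b * Q + c * R + m * S = m * (P + Q + R + S).
Proof. by move=> -> -> ->; ring. Qed.

Lemma Yinv psi : G_invariant Lambda (Y_BB psi).
Proof.
move=> t x Gt [[I [HI Hz]] [H1 H2]].
have [[A1 [A2 A3]] [B1 [B2 B3]]] := G_rel Gt.
split; [|split].
- exists I; split => // i; rewrite /act => /eqP; rewrite mulf_eq0.
  case: Gt => tn _; rewrite (negbTE (tn i)) /= => /eqP; exact: Hz.
- transitivity ((cx t 1 * cx t 2 * cx t 3 * cx t 4 * cx t 5 * cx t 6) * p1 psi x);
    last by rewrite H1 mulr0.
  rewrite /p1 !cx_act -(sum4_id _ _ _ _ A1 A2 A3); ring.
- transitivity ((cx t 7 * cx t 8 * cx t 9 * cx t 10 * cx t 11 * cx t 12) * p2 psi x);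
    last by rewrite H2 mulr0.
  rewrite /p2 !cx_act -(sum4_id _ _ _ _ B1 B2 B3); ring.
Qed.


Definition XX (k : nat) : {mpoly C[12]} := 'X_(inord k.-1).

Definition P1 (psi : C) : {mpoly C[12]} :=
  XX 1 * XX 1 * XX 1 * XX 7 * XX 7 * XX 7 + XX 2 * XX 2 * XX 2 * XX 8 * XX 8 * XX 8 + XX 3 * XX 3 * XX 3 * XX 9 * XX 9 * XX 9
  + psi%:MP * (XX 1 * XX 2 * XX 3 * XX 4 * XX 5 * XX 6).
Definition P2 (psi : C) : {mpoly C[12]} :=
  XX 4 * XX 4 * XX 4 * XX 10 * XX 10 * XX 10 + XX 5 * XX 5 * XX 5 * XX 11 * XX 11 * XX 11 + XX 6 * XX 6 * XX 6 * XX 12 * XX 12 * XX 12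
  + psi%:MP * (XX 7 * XX 8 * XX 9 * XX 10 * XX 11 * XX 12).

Lemma mevalXX x k : meval x (XX k) = cx x k.
Proof. by rewrite /XX mevalXU. Qed.

Lemma mevalP1 psi x : meval x (P1 psi) = p1 psi x.
Proof. rewrite /P1 !mevalD !mevalM mevalC !mevalXX /p1; ring. Qed.
Lemma mevalP2 psi x : meval x (P2 psi) = p2 psi x.
Proof. rewrite /P2 !mevalD !mevalM mevalC !mevalXX /p2; ring. Qed.

Lemma Yclosed psi : zclosed Lambda (Y_BB psi).
Proof.
exists (fun f => f = P1 psi \/ f = P2 psi) => x; split.
  move=> [Hn [H1 H2]]; split => // f [->|->]; by rewrite ?mevalP1 ?mevalP2.
move=> [Hn H]; split => //; split.
  by rewrite -mevalP1; apply: H; left.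
by rewrite -mevalP2; apply: H; right.
Qed.


Lemma face_empty m (M : 'M[int]_(5, m)) (I : {set 'I_m}) :
  (forall i, i \notin I) -> face_set M I.
Proof.
move=> H; exists (fun _ => 0); split => [i hi|i _]; first by have := H i; rewrite hi.
by rewrite big1 ?ltr01 // => k _; rewrite mul0r.
Qed.

Lemma nonexc0 m (M : 'M[int]_(5, m)) (v : 'I_m -> C) :
  (forall i, v i != 0) -> nonexc M v.
Proof.
move=> hv; exists set0; split; first by apply: face_empty => i; rewrite inE.
by move=> i /eqP; rewrite (negbTE (hv i)).
Qed.

Lemma S0_sub psi z : S0 psi z -> phi_preimage (fun y => U_iso y /\ Y_LT psi y) z.
Proof.
move=> [nz [h1 h2]].
have nzc k : cx z k != 0 by apply: nz.
split; first exact: nonexc0.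
pose a := 3.-root (cx z 10 * cx z 11 * cx z 12).
pose b := 3.-root (cx z 1 * cx z 2 * cx z 3).
have ha : a ^+ 3 = cx z 10 * cx z 11 * cx z 12 by rewrite /a (rootCK (isT : (0 < 3)%N)).
have hb : b ^+ 3 = cx z 1 * cx z 2 * cx z 3 by rewrite /b (rootCK (isT : (0 < 3)%N)).
have a0 : a != 0 by rewrite /a rootC_eq0 // !mulf_neq0.
have b0 : b != 0 by rewrite /b rootC_eq0 // !mulf_neq0.
exists a, b; split => //; split => //.
have nY : forall j, phi_lift z a b j != 0.
  move=> j; rewrite /phi_lift; case: j => [[|[|[|[|[|[|j]]]]]] hj] //=; by rewrite !mulf_neq0.
split; split.
- exact: nonexc0.
- apply: face_empty => i; apply/imsetP => -[j]; rewrite inE => /eqP hj _.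
  by move: (nY j); rewrite hj eqxx.
- exact: nonexc0.
- by split; [rewrite q1_phi // h1 mulr0 | rewrite q2_phi // h2 mulr0].
Qed.

Local Close Scope complex_scope.

Theorem proposition2p10 :
  exists bad : seq C, forall psi : C, psi \notin bad ->
    forall x : 'I_12 -> C, Y_BB psi x <-> strict_transform (Y_LT psi) x.
Proof.
exists [:: 0] => psi; rewrite mem_seq1 => psi0 x; split.
- move=> HY; split; first by case: HY.
  move=> A [F HF] _ Hsub.
  apply/HF; split; first by case: HY.
  move=> f Ff.
  apply: (lip_zero (lip_meval x f)) => d d0.
  have [z [Sz Hz]] := density psi0 HY d0.
  exists z; split => //.
  by have /HF [_ ->] := Hsub z (S0_sub Sz).
- move=> [Hn H]; apply: H; [exact: Yclosed | exact: Yinv | move=> y; exact: pre_sub].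
Qed.
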